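(* Let $\Sigma=\{0,1\}$ and let $w\in\Sigma^+\setminus\Sigma^*11\Sigma^*$ with $|w|=k\ge1$. Then (1) $w\in0\Sigma^*$ if and only if $0\le\mathrm{val}_{\mathcal{F}c}(w)<F_{k-1}$; (2) $w\in1\Sigma^*$ if and only if $-F_{k-2}\le\mathrm{val}_{\mathcal{F}c}(w)<0$.
   Context: Fibonacci numbers: $F_0=1$, $F_1=2$, $F_n=F_{n-1}+F_{n-2}$ for $n\ge2$, extended to negative indices by the same recurrence ($F_{-1}=1$, $F_{-2}=0$). For a nonempty binary word $w=w_{k-1}\cdots w_0$ (digits indexed from the right), $\mathrm{val}_{\mathcal{F}c}(w)=\sum_{i=0}^{k-1}w_iF_i-w_{k-1}F_k$. *)

(* Defs.v *)
From mathcomp Require Import all_boot all_order all_algebra.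
Set Implicit Arguments. Unset Strict Implicit. Unset Printing Implicit Defensive.
Import GRing.Theory Num.Theory.
Local Open Scope ring_scope.

Fixpoint fib (n : nat) : nat :=
  match n with
  | 0 => 0
  | 1 => 1
  | (m.+1 as p).+1 => fib p + fib m
  end%N.

(* Paper's Fibonacci numbers on all integer indices:
   F_n = fib (n+2) for n >= -2 (so F_0 = 1, F_1 = 2, F_{-1} = 1, F_{-2} = 0),
   and F_{-2-j} = (-1)^(j+1) fib j for j >= 0, which is the unique extension
   satisfying F_n = F_{n-1} + F_{n-2} for all n. *)
Definition F (n : int) : int :=
  match n with
  | Posz m => (fib m.+2)%:Z
  | Negz m => (* n = -(m+1) *)
      if (m <= 1)%N then (fib (1 - m)%N)%:Z
      else (-1) ^+ (m - 1)%N.+1 * (fib (m - 1)%N)%:Z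
  end.

(* A binary word w = w_{k-1} ... w_0 is represented by the list
   [:: w_{k-1}; ...; w_0] (leftmost = most significant digit first).
   digit w i = w_i, indexed from the right. *)
Definition digit (w : seq bool) (i : nat) : int :=
  (nth false w (size w - i.+1)%N : nat)%:Z.

Definition valFc (w : seq bool) : int :=
  \sum_(i < size w) digit w i * F i%:Z
  - digit w (size w).-1 * F (size w)%:Z.

Definition has11 (w : seq bool) : bool :=
  has (fun i => nth false w i && nth false w i.+1) (iota 0 (size w)).

(* Main.v *)
Require Import Defs.
From mathcomp Require Import all_boot all_order all_algebra.
From mathcomp Require Import zify.
Import GRing.Theory Num.Theory.
Local Open Scope ring_scope.

Fixpoint Sv (v : seq bool) : nat :=
  match v with [::] => 0%N | b :: v' => (b * fib (size v').+2 + Sv v')%N end.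

Lemma sum_Sv (w : seq bool) :
  \sum_(i < size w) digit w i * F i%:Z = (Sv w)%:Z.
Proof.
elim: w => [|b v IH]; first by rewrite big_ord0.
rewrite /= big_ord_recr /=.
have -> : \sum_(i < size v) digit (b :: v) (widen_ord (leqnSn (size v)) i) * F i%:Z
   = \sum_(i < size v) digit v i * F i%:Z.
  apply: eq_bigr => i _; congr (_ * _).
  rewrite /digit /=.
  have hi := ltn_ord i.
  have -> : ((size v).+1 - i.+1)%N = (size v - i.+1).+1 by lia.
  by [].
rewrite IH.
have -> : digit (b :: v) (size v) = b by rewrite /digit /= subnn.
change (F (size v)%:Z) with ((fib (size v).+2)%:Z).
lia.
Qed.

Lemma valFc_cons b v :
  valFc (b :: v) = (Sv v)%:Z - (b * fib (size v).+1)%N%:Z.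
Proof.
rewrite /valFc sum_Sv.
have -> : digit (b :: v) (size (b :: v)).-1 = b by rewrite /digit /= subnn.
change (F (size (b :: v))%:Z) with ((fib (size v).+3)%:Z).
change (Sv (b :: v)) with (b * fib (size v).+2 + Sv v)%N.
have e : fib (size v).+3 = (fib (size v).+2 + fib (size v).+1)%N by [].
move: e; generalize (fib (size v).+3) (fib (size v).+2) (fib (size v).+1) => a c d ->.
rewrite !PoszD !PoszM; lia.
Qed.

Lemma has11_cons b v :
  has11 (b :: v) = (b && head false v) || has11 v.
Proof.
rewrite /has11 /=.
have -> : iota 1 (size v) = map succn (iota 0 (size v)).
  by rewrite (iotaDl 1 0).
rewrite has_map.
by case: v.
Qed.

Lemma Sv_bound v : ~~ has11 v ->
  (Sv v < fib (size v).+2)%N /\ (~~ head false v -> (Sv v < fib (size v).+1)%N).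
Proof.
elim: v => [|b v IH]; first by [].
rewrite has11_cons negb_or => /andP [hb hv].
have [A B] := IH hv.
change (Sv (b :: v)) with (b * fib (size v).+2 + Sv v)%N.
change (size (b :: v)) with (size v).+1.
change (head false (b :: v)) with b.
have e : fib (size v).+3 = (fib (size v).+2 + fib (size v).+1)%N by [].
move: e A B; generalize (fib (size v).+3) (fib (size v).+2) (fib (size v).+1) => a c d -> A B.
split.
- case: b hb => /= hb.
  + have := B hb; lia.
  + lia.
- case: b hb => //= _ _; lia.
Qed.

Lemma F_m1 n : F ((n.+1)%:Z - 1) = (fib n.+2)%:Z.
Proof. by have -> : (n.+1)%:Z - 1 = n%:Z by lia. Qed.

Lemma F_m2 n : F ((n.+1)%:Z - 2) = (fib n.+1)%:Z.
Proof.
case: n => [|m]; first by [].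
by have -> : (m.+2)%:Z - 2 = m%:Z by lia.
Qed.

Theorem lemma6p4 (w : seq bool) :
  (1 <= size w)%N -> ~~ has11 w ->
  let k : int := (size w)%:Z in
  ((head true w == false) = (0 <= valFc w < F (k - 1)))
  /\ ((head false w == true) = (- F (k - 2) <= valFc w < 0)).
Proof.
case: w => [|b v] // _ h k.
change k with ((size v).+1)%:Z; clear k.
change (head true (b :: v)) with b; change (head false (b :: v)) with b.
rewrite F_m1 F_m2 valFc_cons.
move: h; rewrite has11_cons negb_or => /andP [hb hv].
have [A B] := Sv_bound v hv.
have e : (fib (size v).+1 <= fib (size v).+2)%N.
  by case: (size v) => //= n; lia.
move: e A B; generalize (fib (size v).+2) (fib (size v).+1) => c d e A B.
case: b hb => /= hb.
- have := B hb. move=> B'; rewrite mul1n /=; split.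
  + apply/esym/negbTE/negP => /andP; lia.
  + rewrite eqxx; apply/esym/andP; split; lia.
- rewrite mul0n /=; split.
  + rewrite eqxx; apply/esym; apply/idP; lia.
  + apply/esym/negbTE/negP => /andP; lia.
Qed.
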